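(* If $F(z,t)=\sum_{n\ge1}\sum_{m\ge0}a_{n,m}z^nt^m$ is very nice, then $\mathcal N F(z,t)$ is nice.
   Context: A bivariate series $F(z,t)$ is nice if $F(z,z^k)$ is a rational function of $z$ for every integer $k\ge0$; it is very nice if it is nice and $F(z,0)$ is also rational. For $G(z,t)=\sum_{n\ge1}\sum_{m\ge0}a_{n,m}z^nt^m$, $\mathcal N G(z,t)=G(z,0)+\sum_{n\ge1}\sum_{m\ge1}a_{n,m}\frac{1}{1-z^m}\cdot\frac{1-(tz)^m}{1-tz}z^n$. *)

(* Defs.v *)
From HB Require Import structures.
From mathcomp Require Import all_boot all_order all_algebra.
Set Implicit Arguments. Unset Strict Implicit. Unset Printing Implicit Defensive.
Import Order.TTheory GRing.Theory Num.Theory.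
Local Open Scope ring_scope.

(* A univariate formal power series in z over K: its coefficient sequence. *)
(* A bivariate series F(z,t) in K[t][[z]] is represented by
   F : nat -> {poly K}, F n = coefficient of z^n (a polynomial in t). *)

(* f is (the expansion of) a rational function of z: f * Q = P for some
   polynomials P, Q with Q <> 0 (coefficientwise Cauchy product). *)
Definition rational_series (K : fieldType) (f : nat -> K) : Prop :=
  exists P Q : {poly K}, Q != 0 /\
    forall N : nat, \sum_(i < N.+1) Q`_i * f (N - i)%N = P`_N.

(* Coefficients of F(z, z^k) = sum_n z^n (F n)(z^k). *)
Definition subst_pow (K : fieldType) (F : nat -> {poly K}) (k : nat) : nat -> K :=
  fun N => \sum_(i < N.+1) ((F i) \Po 'X^k)`_(N - i)%N.

(* Coefficients of F(z,0). *)
Definition at_t0 (K : fieldType) (F : nat -> {poly K}) : nat -> K :=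
  fun N => (F N)`_0.

Definition nice (K : fieldType) (F : nat -> {poly K}) : Prop :=
  forall k : nat, rational_series (subst_pow F k).

Definition very_nice (K : fieldType) (F : nat -> {poly K}) : Prop :=
  nice F /\ rational_series (at_t0 F).

(* The operator N:
   N G(z,t) = G(z,0) + sum_{n>=1,m>=1} a_{n,m} z^n/(1-z^m) (1-(tz)^m)/(1-tz)
            = G(z,0) + sum_{n,m>=1} sum_{i>=0} sum_{j<m} a_{n,m} t^j z^(n+m*i+j). *)
Definition NOp (K : fieldType) (G : nat -> {poly K}) : nat -> {poly K} :=
  fun N => ((G N)`_0)%:P +
    \sum_(1 <= n < N.+1) \sum_(1 <= m < size (G n)) \sum_(i < N.+1) \sum_(j < m)
      (if (n + m * i + j == N)%N then (G n)`_m *: 'X^j else 0).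

(* Main.v *)
Require Import Defs.
From HB Require Import structures.
From mathcomp Require Import all_boot all_order all_algebra.
From mathcomp Require Import zify ring.
Set Implicit Arguments. Unset Strict Implicit.
Import GRing.Theory.
Local Open Scope ring_scope.

Section Ser.
Variable K : fieldType.
Implicit Types (f g : nat -> K) (p q : {poly K}).

Definition conv p f : nat -> K := fun N => \sum_(i < N.+1) p`_i * f (N - i)%N.

Lemma conv_eq p f g : (forall j, f j = g j) -> forall N, conv p f N = conv p g N.
Proof. by move=> h N; apply: eq_bigr => i _; rewrite h. Qed.

Lemma coefM_ext p (h1 h2 : {poly K}) N : (forall j, (j <= N)%N -> h1`_j = h2`_j) ->
  (p * h1)`_N = (p * h2)`_N.
Proof.
move=> h; rewrite !coefMr; apply: eq_bigr => i _; rewrite h //.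
by rewrite -ltnS.
Qed.

Lemma conv_polyE p f N : conv p f N = (p * \poly_(i < N.+1) f i)`_N.
Proof.
rewrite coefM; apply: eq_bigr => i _; rewrite coef_poly.
by rewrite ifT // ltnS leq_subr.
Qed.

Lemma conv_ext p f (h : {poly K}) N : (forall j, (j <= N)%N -> f j = h`_j) ->
  conv p f N = (p * h)`_N.
Proof.
move=> hf; rewrite conv_polyE; apply: coefM_ext => j hj.
by rewrite coef_poly ltnS hj hf.
Qed.

Lemma conv_mul p q f N : conv (p * q) f N = conv p (conv q f) N.
Proof.
rewrite (@conv_ext p (conv q f) (q * \poly_(i < N.+1) f i)).
  by rewrite mulrA conv_polyE.
move=> j hj; rewrite conv_polyE; apply: coefM_ext => i hi.
by rewrite !coef_poly ltnS hi ltnS (leq_trans hi hj).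
Qed.

Lemma conv_add p f g N : conv p (fun n => f n + g n) N = conv p f N + conv p g N.
Proof. by rewrite /conv -big_split; apply: eq_bigr => i _; rewrite mulrDr. Qed.

Lemma conv_scale p c f N : conv p (fun n => c * f n) N = c * conv p f N.
Proof. by rewrite /conv mulr_sumr; apply: eq_bigr => i _; rewrite mulrCA. Qed.

Lemma conv_coef p (P : {poly K}) N : conv p (fun n => P`_n) N = (p * P)`_N.
Proof. by rewrite coefM. Qed.

Lemma ratE f : rational_series f <->
  exists P Q : {poly K}, Q != 0 /\ forall N, conv Q f N = P`_N.
Proof. by []. Qed.

Lemma rat_ext f g : (forall n, f n = g n) -> rational_series f -> rational_series g.
Proof.
move=> h /ratE [P [Q [hQ hc]]]; apply/ratE; exists P, Q; split=> // N.
by rewrite -(conv_eq _ h) hc.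
Qed.

Lemma rat_add f g : rational_series f -> rational_series g ->
  rational_series (fun n => f n + g n).
Proof.
move=> /ratE [P1 [Q1 [h1 c1]]] /ratE [P2 [Q2 [h2 c2]]]; apply/ratE.
exists (Q2 * P1 + Q1 * P2), (Q1 * Q2); split; first by rewrite mulf_neq0.
move=> N; rewrite conv_add coefD; congr (_ + _).
  rewrite mulrC conv_mul (conv_eq _ c1) conv_coef //.
by rewrite conv_mul (conv_eq _ c2) conv_coef.
Qed.

Lemma rat_scale c f : rational_series f -> rational_series (fun n => c * f n).
Proof.
move=> /ratE [P [Q [h hc]]]; apply/ratE; exists (c *: P), Q; split=> // N.
by rewrite conv_scale hc coefZ.
Qed.

Lemma rat0 : rational_series (fun _ : nat => (0 : K)).
Proof.
apply/ratE; exists 0, 1; split; first exact: oner_neq0.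
by move=> N; rewrite coef0 /conv big1 // => i _; rewrite mulr0.
Qed.

Lemma rat_sum (h : nat -> nat -> K) k : (forall l, rational_series (h l)) ->
  rational_series (fun n => \sum_(l < k) h l n).
Proof.
move=> H; elim: k => [|k IH].
  by apply: (rat_ext _ rat0) => n; rewrite big_ord0.
apply: (rat_ext _ (rat_add IH (H k))) => n; by rewrite big_ord_recr.
Qed.

Lemma rat_div p f : p != 0 -> rational_series (conv p f) -> rational_series f.
Proof.
move=> hp /ratE [P [Q [h hc]]]; apply/ratE; exists P, (Q * p); split.
  by rewrite mulf_neq0.
by move=> N; rewrite conv_mul.
Qed.

End Ser.
Section Id.
Variable K : fieldType.

Lemma coef_ZXn (a : K) e d : (a *: 'X^e)`_d = if (e == d)%N then a else 0.
Proof. by rewrite coefZ coefXn eq_sym; case: eqP => _; rewrite ?mulr1 ?mulr0. Qed.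

Lemma coef_compXn_gen (p : {poly K}) l d :
  (p \Po 'X^l)`_d = \sum_(m < size p) (if (l * m == d)%N then p`_m else 0).
Proof.
rewrite coef_comp_poly; apply: eq_bigr => m _; rewrite -exprM coefXn eq_sym.
by case: eqP => _; rewrite ?mulr1 ?mulr0.
Qed.

Lemma sum_widen_nat (G : nat -> K) m n1 n2 : (n1 <= n2)%N ->
  (forall i, (n1 <= i < n2)%N -> G i = 0) ->
  \sum_(m <= i < n1) G i = \sum_(m <= i < n2) G i.
Proof.
move=> h hz; rewrite (big_nat_widen _ _ _ _ _ h) [RHS]big_mkcond /=.
rewrite big_mkcond /=; apply: eq_big_nat => i /andP[_ hi].
by case: ifP => // /negbT; rewrite -leqNgt => hi'; rewrite hz // hi' hi.
Qed.

Lemma sum_widen_ord (G : nat -> K) n1 n2 : (n1 <= n2)%N ->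
  (forall i, (n1 <= i < n2)%N -> G i = 0) ->
  \sum_(i < n1) G i = \sum_(i < n2) G i.
Proof. by move=> h hz; rewrite -!(big_mkord xpredT); apply: sum_widen_nat. Qed.

Lemma sum_last (G : nat -> K) N :
  \sum_(i < N.+1) (if (0 == N - i)%N then G i else 0) = G N.
Proof.
rewrite big_ord_recr /= subnn eqxx big1 ?add0r // => i _.
by rewrite ifF //; apply/eqP; have := ltn_ord i; lia.
Qed.

Lemma sum_split0 (p : {poly K}) (P : pred nat) :
  \sum_(m < size p) (if P m then p`_m else 0) =
  (if P 0%N then p`_0 else 0) + \sum_(1 <= m < size p) (if P m then p`_m else 0).
Proof.
case hs: (size p) => [|s].
  by rewrite big_ord0 big_geq // nth_default ?hs // if_same addr0.
rewrite -(big_mkord xpredT (fun m => if P m then p`_m else 0)). by rewrite big_ltn. Qed.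

Variable F : nat -> {poly K}.
Hypothesis F0 : F 0%N = 0.

Lemma substF l N : subst_pow F l N = (F N)`_0 +
  \sum_(1 <= n < N.+1) \sum_(1 <= m < size (F n))
     (if (n + m * l == N)%N then (F n)`_m else 0).
Proof.
rewrite /subst_pow.
under eq_bigr => i _ do rewrite coef_compXn_gen (sum_split0 _ (fun m => l * m == N - i)%N) /= muln0.
rewrite big_split /= (sum_last (fun i => (F i)`_0)); congr (_ + _).
rewrite -(big_mkord xpredT (fun i => \sum_(1 <= m < size (F i)) (if (l * m == N - i)%N then (F i)`_m else 0))) big_ltn // F0 size_poly0 [X in X + _]big_geq // add0r.
apply: eq_big_nat => n /andP[hn1 hn2]; apply: eq_bigr => m _.
have -> : (l * m == N - n)%N = (n + m * l == N)%N.
  by apply/idP/idP => /eqP h; apply/eqP; lia.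
by [].
Qed.

Lemma NOp_comp k i' d : ((NOp F i') \Po 'X^k)`_d =
  (if (0 == d)%N then (F i')`_0 else 0) +
  \sum_(1 <= n < i'.+1) \sum_(1 <= m < size (F n)) \sum_(i < i'.+1) \sum_(j < m)
     (if (n + m * i + j == i')%N && (k * j == d)%N then (F n)`_m else 0).
Proof.
rewrite /NOp comp_polyD comp_polyC coefD coefC eq_sym; congr (_ + _).
rewrite -[_ \Po _]/(comp_poly _ _) raddf_sum coef_sum; apply: eq_bigr => n _.
rewrite raddf_sum coef_sum; apply: eq_bigr => m _.
rewrite raddf_sum coef_sum; apply: eq_bigr => i _.
rewrite raddf_sum coef_sum; apply: eq_bigr => j _.
case: ifP => _ /=; last by rewrite raddf0 coef0.
by rewrite /= comp_polyZ comp_Xn_poly -exprM coef_ZXn.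
Qed.


Lemma widen_both (E : nat -> nat -> nat -> nat -> K) (sz : nat -> nat) a M :
  (a < M)%N -> (forall n m i j, (1 <= m)%N -> (a < n + m * i)%N -> E n m i j = 0) ->
  \sum_(1 <= n < a.+1) \sum_(1 <= m < sz n) \sum_(i < a.+1) \sum_(j < m) E n m i j =
  \sum_(1 <= n < M) \sum_(1 <= m < sz n) \sum_(i < M) \sum_(j < m) E n m i j.
Proof.
move=> haM hE.
transitivity (\sum_(1 <= n < a.+1) \sum_(1 <= m < sz n) \sum_(i < M) \sum_(j < m) E n m i j).
  apply: eq_big_nat => n /andP[hn _]; apply: eq_big_nat => m /andP[hm _].
  apply: (sum_widen_ord (G := fun i => \sum_(j < m) E n m i j)) => // i /andP[hi _]; apply: big1 => j _; apply: hE => //.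
  have := leq_pmull i hm; lia.
apply: (sum_widen_nat (G := fun n => \sum_(1 <= m < sz n) \sum_(i < M) \sum_(j < m) E n m i j)) => // n /andP[hn _].
apply: big1_seq => m /andP[_]; rewrite mem_index_iota => /andP[hm _].
apply: big1 => i _; apply: big1 => j _; apply: hE => //; lia.
Qed.

Lemma sum_pick N (c d : nat) (a : K) :
  \sum_(i' < N.+1) (if (c == (i' : nat))%N && (d == N - i')%N then a else 0) =
  if (c + d == N)%N then a else 0.
Proof.
case h: (c + d == N)%N.
  have hc : (c < N.+1)%N by move/eqP: h; lia.
  rewrite (bigD1 (Ordinal hc)) //= eqxx /=.
  have -> : (d == N - c)%N by move/eqP: h => h; apply/eqP; lia.
  rewrite big1 ?addr0 // => i' hne.
  case: (c =P i') => [hci|_] //=.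
  by move: hne; rewrite -val_eqE /= hci eqxx.
apply: big1 => i' _.
case: (c =P i') => [hci|_] //=; case: (d =P (N - i')%N) => [hd|_] //=.
have := ltn_ord i'; move/negbT: h; move/eqP; lia.
Qed.

Lemma substN k N M : (N < M)%N -> subst_pow (NOp F) k N = (F N)`_0 +
  \sum_(1 <= n < M) \sum_(1 <= m < size (F n)) \sum_(i < M) \sum_(j < m)
     (if (n + m * i + k.+1 * j == N)%N then (F n)`_m else 0).
Proof.
move=> hNM; rewrite /subst_pow.
under eq_bigr => i' _ do rewrite NOp_comp.
rewrite big_split /= (sum_last (fun i => (F i)`_0)); congr (_ + _).
have W : forall i' : 'I_N.+1,
  \sum_(1 <= n < i'.+1) \sum_(1 <= m < size (F n)) \sum_(i < i'.+1) \sum_(j < m)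
     (if (n + m * i + j == i')%N && (k * j == N - i')%N then (F n)`_m else 0) =
  \sum_(1 <= n < M) \sum_(1 <= m < size (F n)) \sum_(i < M) \sum_(j < m)
     (if (n + m * i + j == i')%N && (k * j == N - i')%N then (F n)`_m else 0).
  move=> i'; apply: (widen_both (E := fun n m i j => if (n + m * i + j == i')%N && (k * j == N - i')%N then (F n)`_m else 0)); first by have := ltn_ord i'; lia.
  by move=> n m i j hm hlt; rewrite ifF //; apply/andP => -[/eqP h _]; lia.
rewrite (eq_bigr _ (fun i' _ => W i')).
rewrite exchange_big; apply: eq_bigr => n _.
rewrite exchange_big; apply: eq_bigr => m _.
rewrite exchange_big; apply: eq_bigr => i _.
rewrite exchange_big; apply: eq_bigr => j _.
by rewrite sum_pick mulSn addnA.
Qed.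


Lemma coef_T k M N :
  (\sum_(1 <= n < M) \sum_(1 <= m < size (F n)) \sum_(i < M) \sum_(j < m)
     (F n)`_m *: 'X^(n + m * i + k.+1 * j))`_N =
  \sum_(1 <= n < M) \sum_(1 <= m < size (F n)) \sum_(i < M) \sum_(j < m)
     (if (n + m * i + k.+1 * j == N)%N then (F n)`_m else 0).
Proof.
rewrite coef_sum; apply: eq_bigr => n _; rewrite coef_sum; apply: eq_bigr => m _.
rewrite coef_sum; apply: eq_bigr => i _; rewrite coef_sum; apply: eq_bigr => j _.
exact: coef_ZXn.
Qed.

End Id.

Lemma geo (K : fieldType) (x : {poly K}) n : (1 - x) * \sum_(i < n) x ^+ i = 1 - x ^+ n.
Proof. by rewrite -opprB mulNr -subrX1 opprB. Qed.

Lemma claim3 (K : fieldType) (a : K) (n m k M N : nat) : (1 <= m)%N -> (N < M)%N ->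
  ((1 - 'X^(k.+1)) * \sum_(i < M) \sum_(j < m) a *: 'X^(n + m * i + k.+1 * j))`_N =
  (\sum_(l < k.+1) a *: 'X^(n + m * l))`_N.
Proof.
move=> hm hN.
pose x : {poly K} := 'X^m. pose y : {poly K} := 'X^(k.+1).
have E1 : \sum_(i < M) \sum_(j < m) a *: 'X^(n + m * i + k.+1 * j) =
    a *: ('X^n * ((\sum_(i < M) x ^+ i) * (\sum_(j < m) y ^+ j))).
  rewrite mulr_suml mulr_sumr scaler_sumr; apply: eq_bigr => i _.
  rewrite mulr_sumr mulr_sumr scaler_sumr; apply: eq_bigr => j _.
  by rewrite /x /y -!exprM -!exprD addnA.
have E2 : \sum_(l < k.+1) a *: 'X^(n + m * l) = a *: ('X^n * \sum_(l < k.+1) x ^+ l).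
  rewrite mulr_sumr scaler_sumr; apply: eq_bigr => l _.
  by rewrite /x -exprM -exprD.
rewrite E1 E2 -scalerAr !coefZ; congr (_ * _).
have -> : (1 - 'X^(k.+1)) * ('X^n * ((\sum_(i < M) x ^+ i) * (\sum_(j < m) y ^+ j))) =
  'X^n * (\sum_(i < M) x ^+ i) * ((1 - y) * \sum_(j < m) y ^+ j).
  by rewrite /y; ring.
rewrite geo.
have -> : y ^+ m = x ^+ k.+1 by rewrite /x /y -!exprM mulnC.
rewrite -geo.
have -> : 'X^n * (\sum_(i < M) x ^+ i) * ((1 - x) * \sum_(l < k.+1) x ^+ l) =
  'X^n * ((1 - x) * \sum_(i < M) x ^+ i) * \sum_(l < k.+1) x ^+ l by ring.
rewrite geo mulrBr mulr1 mulrBl coefB.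
have -> : 'X^n * x ^+ M = 'X^(n + m * M) :> {poly K} by rewrite /x -exprM -exprD.
rewrite [X in _ - X]coefXnM ifT ?subr0 //.
have := leq_pmull M hm; lia.
Qed.

Lemma dummy : True. Proof. by []. Qed.
Theorem mainTheorem6 (K : fieldType) (F : nat -> {poly K}) :
  F 0%N = 0 -> very_nice F -> nice (NOp F).
Proof.
move=> F0 [hn h0] k.
pose R := fun n => subst_pow (NOp F) k n + (-1) * at_t0 F n.
pose RR := fun n => \sum_(l < k.+1) (subst_pow F l n + (-1) * at_t0 F n).
have hRR : rational_series RR.
  apply: (rat_sum (h := fun l n => subst_pow F l n + (-1) * at_t0 F n)) => l.
  exact: rat_add (hn l) (rat_scale _ h0).
have key : forall N, conv (1 - 'X^(k.+1)) R N = RR N.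
  move=> N.
  pose T := \sum_(1 <= n < N.+1) \sum_(1 <= m < size (F n)) \sum_(i < N.+1)
     \sum_(j < m) (F n)`_m *: 'X^(n + m * i + k.+1 * j).
  rewrite (@conv_ext K _ R T N); last first.
    move=> j hj; rewrite /R /T coef_T (@substN K F k j N.+1) //.
    by rewrite /at_t0 mulN1r addrC addKr.
  rewrite /T mulr_sumr coef_sum /RR.
  under [RHS]eq_bigr => l _ do rewrite (substF F0 l N) /at_t0 mulN1r addrC addKr.
  rewrite exchange_big; apply: eq_big_nat => n _.
  rewrite mulr_sumr coef_sum [RHS]exchange_big; apply: eq_big_nat => m /andP[hm _].
  rewrite claim3 // coef_sum; apply: eq_bigr => l _; exact: coef_ZXn.
have hR : rational_series R.
  apply: (rat_div (p := 1 - 'X^(k.+1))).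
    apply/eqP => /(congr1 (fun p : {poly K} => p`_0)).
    by rewrite coefB coef1 coefXn /= subr0 coef0 => /eqP; rewrite oner_eq0.
  exact: (rat_ext (fun N => esym (key N)) hRR).
apply: (rat_ext _ (rat_add hR h0)) => n.
by rewrite /R mulN1r addrNK.
Qed.
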